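(* Let $1,2,3$ be three distinct vertices of $G$ such that the induced subgraph $G[\{1,2,3\}]$ has edge set exactly $\{12,13,23\}$, and suppose $w_{12}\le w_{13}\le w_{23}$. If the matching game $\Gamma_G$ is population monotonic, then $w_{23}\ge w_{12}+w_{13}$.
   Context: $G=(V,E;w)$ is a finite simple graph with edge weights $w:E\to\mathbb{R}$, $w_e>0$ for all $e\in E$; $w_{ij}$ denotes the weight of edge $ij$. The matching game on $G$ is the cooperative game $\Gamma_G=(N,\gamma)$ with player set $N=V$ and, for $S\subseteq N$, $\gamma(S)$ equal to the maximum weight of a matching in the induced subgraph $G[S]$ (so $\gamma(\emptyset)=0$). A population monotonic allocation scheme (PMAS) is a family $(\boldsymbol{x}_S)_{\emptyset\neq S\subseteq N}$ with $\boldsymbol{x}_S=(x_{S,i})_{i\in S}\in\mathbb{R}^S$ such that (efficiency) $\sum_{i\in S}x_{S,i}=\gamma(S)$ for every nonempty $S\subseteq N$, and (monotonicity) $x_{S,i}\le x_{T,i}$ whenever $\emptyset\ne S\subseteq T\subseteq N$ and $i\in S$. $\Gamma_G$ is called population monotonic if it admits a PMAS. *)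

(* Defs.v *)
From HB Require Import structures.
From mathcomp Require Import all_boot all_order all_algebra.
Set Implicit Arguments. Unset Strict Implicit. Unset Printing Implicit Defensive.
Import Order.TTheory GRing.Theory Num.Theory.
Local Open Scope ring_scope.

(* A finite simple graph on vertex type V: its edge set E is a set of
   2-element subsets of V.  Edge weights are a function w on {set V};
   only its values on edges matter; w_{ij} is w [set i; j]. *)
Definition simple_graph (V : finType) (E : {set {set V}}) : Prop :=
  forall f, f \in E -> #|f| = 2%N.

Definition positive_weights (R : realFieldType) (V : finType)
  (E : {set {set V}}) (w : {set V} -> R) : Prop :=
  forall f, f \in E -> 0 < w f.

Definition is_matching (V : finType) (E : {set {set V}}) (S : {set V})
  (M : {set {set V}}) : bool :=
  [&& M \subset E, [forall f in M, f \subset S] & trivIset M].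

(* gamma(S): maximum weight of a matching in G[S] (the empty matching has
   weight 0, so the max with initial value 0 is the true maximum). *)
Definition gamma (R : realFieldType) (V : finType) (E : {set {set V}})
  (w : {set V} -> R) (S : {set V}) : R :=
  \big[Num.max/0]_(M : {set {set V}} | is_matching E S M) \sum_(f in M) w f.

(* Population monotonic allocation scheme: x S i is x_{S,i}
   (only meaningful for i in S). *)
Definition is_PMAS (R : realFieldType) (V : finType) (E : {set {set V}})
  (w : {set V} -> R) (x : {set V} -> V -> R) : Prop :=
  (forall S : {set V}, S != set0 -> \sum_(i in S) x S i = gamma E w S) /\
  (forall (S T : {set V}) (i : V), S != set0 -> S \subset T -> i \in S ->
      x S i <= x T i).

Definition population_monotonic (R : realFieldType) (V : finType)
  (E : {set {set V}}) (w : {set V} -> R) : Prop :=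
  exists x : {set V} -> V -> R, is_PMAS E w x.

(* Main.v *)
Require Import Defs.
From HB Require Import structures.
From mathcomp Require Import all_boot all_order all_algebra.
From mathcomp Require Import lra zify.
From Stdlib Require Import Lia.
Import Order.TTheory GRing.Theory Num.Theory.
Local Open Scope ring_scope.

Lemma gamma_ge (R : realFieldType) (V : finType) (E : {set {set V}})
  (w : {set V} -> R) (S e : {set V}) :
  e \in E -> e \subset S -> w e <= gamma E w S.
Proof.
move=> eE eS; rewrite /gamma.
have -> : w e = \sum_(f in [set e]) w f by rewrite big_set1.
apply: (le_bigmax_cond _ (P := fun M => is_matching E S M)
          (fun M => \sum_(f in M) w f)).
rewrite /is_matching sub1set eE /=; apply/andP; split.
  by apply/forallP => f; apply/implyP; rewrite inE => /eqP ->.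
by apply: trivIset1.
Qed.

Lemma sum_pair (R : realFieldType) (V : finType) (F : V -> R) (a b : V) :
  a != b -> \sum_(i in [set a; b]) F i = F a + F b.
Proof.
move=> ab; rewrite big_setU1 /= ?big_set1 // inE; exact: ab.
Qed.

Lemma lin_fact (R : realFieldType)
  (a b c g12 g13 g23 gT p1 p2 q1 q3 r2 r3 t1 t2 t3 : R) :
  a <= g12 -> b <= g13 -> c <= g23 -> p1 + p2 = g12 -> q1 + q3 = g13 ->
  r2 + r3 = g23 -> t3 + (t1 + t2) = gT -> gT <= c ->
  p1 <= t1 -> p2 <= t2 -> q1 <= t1 -> q3 <= t3 -> r2 <= t2 -> r3 <= t3 ->
  a + b <= c.
Proof. move=> *; lra. Qed.

Theorem mainTheorem1 (R : realFieldType) (V : finType) (E : {set {set V}})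
  (w : {set V} -> R) (v1 v2 v3 : V) :
  simple_graph E -> positive_weights E w ->
  v1 != v2 -> v1 != v3 -> v2 != v3 ->
  [set v1; v2] \in E -> [set v1; v3] \in E -> [set v2; v3] \in E ->
  w [set v1; v2] <= w [set v1; v3] -> w [set v1; v3] <= w [set v2; v3] ->
  population_monotonic E w ->
  w [set v1; v2] + w [set v1; v3] <= w [set v2; v3].
Proof.
move=> sg pw n12 n13 n23 e12 e13 e23 hab hbc [x [eff mon]].
set a := w [set v1; v2]; set b := w [set v1; v3]; set c := w [set v2; v3].
set T := [set v1; v2; v3].
have ne2 : forall u v : V, [set u; v] != set0.
  by move=> u v; apply/set0Pn; exists u; rewrite !inE eqxx.
have sT : forall u v : V, u \in T -> v \in T -> [set u; v] \subset T.
  by move=> u v uT vT; apply/subsetP => z; rewrite in_set2 => /orP [] /eqP ->.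
have inT1 : v1 \in T by rewrite !inE eqxx.
have inT2 : v2 \in T by rewrite !inE eqxx !orbT.
have inT3 : v3 \in T by rewrite !inE eqxx !orbT.
have inp1 : forall u v : V, u \in [set u; v] by move=> u v; rewrite !inE eqxx.
have inp2 : forall u v : V, v \in [set u; v] by move=> u v; rewrite !inE eqxx orbT.
have gT : gamma E w T <= c.
  apply/bigmax_leP; split; first by apply/ltW; exact: pw.
  move=> M /and3P [ME /forallP MS tM].
  have cardf : forall f, f \in M -> #|f| = 2%N by move=> f fM; apply: sg; exact: (subsetP ME).
  have fsub : forall f, f \in M -> f \subset T by move=> f fM; exact: (implyP (MS f) fM).
  have wf : forall f, f \in M -> w f <= c.
    move=> f fM; have cf := cardf f fM; have fT := fsub f fM.
    have key : forall u v : V, u != v -> u \in f -> v \in f -> f = [set u; v].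
      move=> u v uv uf vf; apply/esym/eqP; rewrite eqEcard cf cards2 uv andbT.
      by apply/subsetP => z; rewrite !inE => /orP [] /eqP ->.
    have small : forall u, f \subset [set u] -> False.
      by move=> u /subset_leq_card; rewrite cf cards1.
    case b1: (v1 \in f); case b2: (v2 \in f); case b3: (v3 \in f).
    - by rewrite (key _ _ n23 b2 b3).
    - by rewrite (key _ _ n12 b1 b2) /c; apply: (le_trans hab hbc).
    - by rewrite (key _ _ n13 b1 b3).
    - exfalso; apply: (small v1); apply/subsetP => z zf.
      move: (subsetP fT z zf); rewrite !inE => /orP [/orP [] | ] /eqP zv; subst z.
      + by rewrite eqxx.
      + by rewrite zf in b2.
      + by rewrite zf in b3.
    - by rewrite (key _ _ n23 b2 b3).
    - exfalso; apply: (small v2); apply/subsetP => z zf.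
      move: (subsetP fT z zf); rewrite !inE => /orP [/orP [] | ] /eqP zv; subst z.
      + by rewrite zf in b1.
      + by rewrite eqxx.
      + by rewrite zf in b3.
    - exfalso; apply: (small v3); apply/subsetP => z zf.
      move: (subsetP fT z zf); rewrite !inE => /orP [/orP [] | ] /eqP zv; subst z.
      + by rewrite zf in b1.
      + by rewrite zf in b2.
      + by rewrite eqxx.
    - exfalso; apply: (small v1); apply/subsetP => z zf.
      move: (subsetP fT z zf); rewrite !inE => /orP [/orP [] | ] /eqP zv; subst z.
      + by rewrite eqxx.
      + by rewrite zf in b2.
      + by rewrite zf in b3.
  have cM : (#|M| <= 1)%N.
    move: tM; rewrite /trivIset => /eqP tM.
    have : (\sum_(B in M) #|B| = 2 * #|M|)%N.
      rewrite (eq_bigr (fun _ => 2%N)); last by move=> B BM; exact: cardf.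
      by rewrite sum_nat_const mulnC.
    have cov : (#|cover M| <= 3)%N.
      apply: (leq_trans (subset_leq_card (_ : cover M \subset T))).
        by apply/bigcupsP => f fM; exact: fsub.
      rewrite /T; apply: (leq_trans (leq_card_setU _ _)).
      by rewrite cards1 cards2; case: (_ != _).
    rewrite tM => h; rewrite h in cov; lia.
  have c0 : 0 <= c by apply/ltW; exact: pw.
  move: cM; rewrite leq_eqVlt ltnS leqn0 cards_eq0 => /orP [/cards1P [f Mf] | /eqP ->].
    by rewrite Mf big_set1; apply: wf; rewrite Mf inE.
  by rewrite big_set0.
have ga : a <= gamma E w [set v1; v2] by apply: gamma_ge => //.
have gb : b <= gamma E w [set v1; v3] by apply: gamma_ge => //.
have gc : c <= gamma E w [set v2; v3] by apply: gamma_ge => //.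
have s12 := eff _ (ne2 v1 v2); rewrite sum_pair // in s12.
have s13 := eff _ (ne2 v1 v3); rewrite sum_pair // in s13.
have s23 := eff _ (ne2 v2 v3); rewrite sum_pair // in s23.
have TT : T != set0 by apply/set0Pn; exists v1.
have sum3 : forall F : V -> R, \sum_(i in T) F i = F v3 + (F v1 + F v2).
  move=> F; rewrite /T setUC big_setU1 /= ?sum_pair // !inE negb_or.
  by rewrite eq_sym n13 eq_sym n23.
have sTe := eff _ TT; rewrite sum3 in sTe.
have m121 := mon _ _ _ (ne2 v1 v2) (sT _ _ inT1 inT2) (inp1 v1 v2).
have m122 := mon _ _ _ (ne2 v1 v2) (sT _ _ inT1 inT2) (inp2 v1 v2).
have m131 := mon _ _ _ (ne2 v1 v3) (sT _ _ inT1 inT3) (inp1 v1 v3).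
have m133 := mon _ _ _ (ne2 v1 v3) (sT _ _ inT1 inT3) (inp2 v1 v3).
have m232 := mon _ _ _ (ne2 v2 v3) (sT _ _ inT2 inT3) (inp1 v2 v3).
have m233 := mon _ _ _ (ne2 v2 v3) (sT _ _ inT2 inT3) (inp2 v2 v3).
exact: (@lin_fact R _ _ _ _ _ _ _ _ _ _ _ _ _ _ _ _ ga gb gc s12 s13 s23 sTe gT m121 m122 m131 m133 m232 m233).
Qed.
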